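(* In the setting of the Cauchy problem below, the generating function $\mathcal D(z,w)=\sum_{(x,y)\in\mathbb Z_+^2} r(x,y)z^{-x-1}w^{-y-1}$ of the solution is (the expansion of) a rational function of $(z,w)$ if and only if the generating function of the initial data $$\Phi(z,w)=\sum_{(x,y)\in X}\varphi(x,y)z^{-x-1}w^{-y-1}$$ is (the expansion of) a rational function. Here: $P(z)=\sum_{\alpha=0}^{m} c_{\alpha,1}z^\alpha$, $Q(z)=\sum_{\alpha=0}^{m} c_{\alpha,0}z^\alpha$ are complex polynomials with $c_{m,1}\ne0$, $m\ge1$, $\deg Q<m$; $X=\{(x,y)\in\mathbb Z_+^2: x<m\text{ or }y=0\}$; $\varphi:X\to\mathbb C$ is arbitrary; and $r$ is the solution of $\sum_{\alpha=0}^{m} c_{\alpha,1} r(x+\alpha,y+1)-\sum_{\alpha=0}^{m} c_{\alpha,0} r(x+\alpha,y)=0$ for all $x,y\ge0$ with $r|_X=\varphi$.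
   Context: $\mathbb Z_+$ denotes the nonnegative integers. A formal Laurent series in $z^{-1},w^{-1}$ is called rational if it is the expansion (in the region where $|z|,|w|$ are large) of a rational function. *)

(* Defs.v *)
From HB Require Import structures.
From mathcomp Require Import all_boot all_order all_algebra.
Set Implicit Arguments. Unset Strict Implicit. Unset Printing Implicit Defensive.
Import Order.TTheory GRing.Theory Num.Theory.
Local Open Scope ring_scope.

(* A formal series  sum_{x,y>=0} d x y * z^(-x-1) w^(-y-1)  is represented by
   its coefficient function d : nat -> nat -> C.
   A polynomial in C[z,w] is represented as q : {poly {poly C}}, the
   coefficient of z^i w^j being (q`_j)`_i (outer variable w, inner z). *)

Definition ser_coefZ (C : nzRingType) (d : nat -> nat -> C) (s t : int) : C :=
  match s, t with
  | Posz x, Posz y => d x y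
  | _, _ => 0
  end.

(* coefficient of z^a w^b (a b : int) in the formal product q(z,w) * D(z,w) *)
Definition polyser_mul_coef (C : nzRingType) (q : {poly {poly C}})
  (d : nat -> nat -> C) (a b : int) : C :=
  \sum_(j < size q) \sum_(i < size q`_j)
     (q`_j)`_i * ser_coefZ d (i%:Z - a - 1) (j%:Z - b - 1).

Definition poly2_coefZ (C : nzRingType) (p : {poly {poly C}}) (a b : int) : C :=
  if (0 <= a) && (0 <= b) then (p`_(absz b))`_(absz a) else 0.

Definition rational_series (C : nzRingType) (d : nat -> nat -> C) : Prop :=
  exists (p q : {poly {poly C}}), q != 0 /\
    forall a b : int, polyser_mul_coef q d a b = poly2_coefZ p a b.

Definition inX (m x y : nat) : bool := (x < m)%N || (y == 0%N).

Definition init_coef (C : nzRingType) (m : nat) (phi : nat -> nat -> C)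
  (x y : nat) : C := if inX m x y then phi x y else 0.

(* Main.v *)
Require Import Defs.
From HB Require Import structures.
From mathcomp Require Import all_boot all_order all_algebra.
From mathcomp Require Import zify ring.
Import Order.TTheory GRing.Theory Num.Theory.
Local Open Scope ring_scope.

Section PS.
Variable C : fieldType.
Implicit Types (q p h : {poly {poly C}}) (d : nat -> nat -> C).

Definition pc q (i j : nat) : C := (q`_j)`_i.

Definition pmul q d (x y : nat) : C :=
  \sum_(j < y.+1) \sum_(i < x.+1) pc q i j * d (x - i)%N (y - j)%N.

Lemma pmul_pc q p x y : pmul q (pc p) x y = pc (q * p) x y.
Proof.
rewrite /pmul /pc coefM coef_sum; apply: eq_bigr => j _.
by rewrite coefM.
Qed.

Lemma pmul_local q d d' x y :
  (forall a b, (a <= x)%N -> (b <= y)%N -> d a b = d' a b) ->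
  pmul q d x y = pmul q d' x y.
Proof.
move=> H; apply: eq_bigr => j _; apply: eq_bigr => i _.
by rewrite H // leq_subr.
Qed.

Lemma pmul_ext q d d' x y :
  (forall a b, d a b = d' a b) -> pmul q d x y = pmul q d' x y.
Proof. by move=> H; apply: pmul_local => a b _ _; apply: H. Qed.

Definition mk2 (f : nat -> nat -> C) (N M : nat) : {poly {poly C}} :=
  \poly_(j < M) \poly_(i < N) f i j.

Lemma pc_mk2 f N M i j :
  pc (mk2 f N M) i j = if (i < N)%N && (j < M)%N then f i j else 0.
Proof.
rewrite /pc /mk2 coef_poly; case: (j < M)%N; last by rewrite coef0 andbF.
by rewrite coef_poly andbT.
Qed.

Lemma pmulA q1 q2 d x y :
  pmul (q1 * q2) d x y = pmul q1 (pmul q2 d) x y.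
Proof.
set T := mk2 d x.+1 y.+1.
have HT : forall a b, (a <= x)%N -> (b <= y)%N -> d a b = pc T a b.
  by move=> a b ha hb; rewrite pc_mk2 ltnS ha ltnS hb.
rewrite (@pmul_local (q1*q2) d (pc T) x y HT) pmul_pc -mulrA -pmul_pc.
rewrite (@pmul_ext q1 _ (pmul q2 (pc T))); last by move=> a b; rewrite pmul_pc.
apply: pmul_local => a b ha hb; apply: pmul_local => a' b' ha' hb'.
by rewrite HT //; [apply: leq_trans ha | apply: leq_trans hb].
Qed.

Definition prat d := exists q p, q != 0 /\ forall x y, pmul q d x y = pc p x y.

Lemma prat_ext d d' : prat d -> (forall a b, d a b = d' a b) -> prat d'.
Proof.
move=> [q [p [nq H]]] E; exists q, p; split=> // x y.
by rewrite -H; apply: pmul_ext => a b; rewrite E.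
Qed.

Lemma prat_pc p : prat (pc p).
Proof. by exists 1, p; split; [exact: oner_neq0 | move=> x y; rewrite pmul_pc mul1r]. Qed.

Lemma pc_add p1 p2 i j : pc (p1 + p2) i j = pc p1 i j + pc p2 i j.
Proof. by rewrite /pc !coefD. Qed.

Lemma prat_add d1 d2 : prat d1 -> prat d2 -> prat (fun a b => d1 a b + d2 a b).
Proof.
move=> [q1 [p1 [n1 H1]]] [q2 [p2 [n2 H2]]].
exists (q1 * q2), (q2 * p1 + q1 * p2); split; first by rewrite mulf_neq0.
move=> x y.
have -> : pmul (q1 * q2) (fun a b => d1 a b + d2 a b) x y =
   pmul (q1 * q2) d1 x y + pmul (q1 * q2) d2 x y.
  by rewrite /pmul -big_split; apply: eq_bigr => j _; rewrite -big_split;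
     apply: eq_bigr => i _; rewrite mulrDr.
rewrite pc_add; congr (_ + _).
  rewrite [q1 * q2]mulrC pmulA -pmul_pc; apply: pmul_ext => a b; by rewrite H1.
rewrite pmulA -pmul_pc; apply: pmul_ext => a b; by rewrite H2.
Qed.

Lemma prat_scale c d : prat d -> prat (fun a b => c * d a b).
Proof.
move=> [q [p [nq H]]]; exists q, ((c%:P)%:P * p); split=> // x y.
have -> : pmul q (fun a b => c * d a b) x y = c * pmul q d x y.
  rewrite /pmul mulr_sumr; apply: eq_bigr => j _; rewrite mulr_sumr;
  by apply: eq_bigr => i _; rewrite mulrCA.
by rewrite H /pc !coefCM.
Qed.

Lemma prat_mulp h d : prat d -> prat (pmul h d).
Proof.
move=> [q [p [nq H]]]; exists q, (h * p); split=> // x y.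
rewrite -pmulA mulrC pmulA -pmul_pc; apply: pmul_ext => a b; exact: H.
Qed.

Lemma prat_div h d : h != 0 -> prat (pmul h d) -> prat d.
Proof.
move=> nh [q [p [nq H]]]; exists (q * h), p; split; first by rewrite mulf_neq0.
by move=> x y; rewrite pmulA.
Qed.

Lemma prat0 : prat (fun _ _ => 0).
Proof.
apply: (@prat_ext (pc 0)); first exact: prat_pc.
by move=> a b; rewrite /pc !coef0.
Qed.

Arguments prat_add {d1 d2}.
Arguments prat_ext {d d'}.
Lemma prat_sum n (F : nat -> nat -> nat -> C) :
  (forall k, (k < n)%N -> prat (F k)) -> prat (fun a b => \sum_(k < n) F k a b).
Proof.
elim: n => [|n IH] H.
  by apply: (@prat_ext (fun _ _ => 0)); [exact: prat0 | move=> a b; rewrite big_ord0].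
have IH' := IH (fun k hk => H k (ltnW hk)).
apply: (prat_ext (prat_add IH' (H n (ltnSn n)))) => a b; by rewrite big_ord_recr.
Qed.

Definition Nq q : nat := \max_(j < size q) size (q`_j)%R.

Lemma pc_out q i j : ((size q <= j)%N || (Nq q <= i)%N) -> pc q i j = 0.
Proof.
rewrite /pc; case: (leqP (size q) j) => [hj _|hj /= hi].
  by rewrite [q`_j]nth_default // coef0.
apply: nth_default; apply: leq_trans _ hi; rewrite /Nq.
exact: (@leq_bigmax _ (fun j : 'I_(size q) => size (q`_j)) (Ordinal hj)).
Qed.

Lemma pc_nz q : q != 0 -> exists i j, pc q i j != 0.
Proof.
move=> nq; exists (size q`_(size q).-1).-1, (size q).-1.
rewrite /pc; have : lead_coef q != 0 by rewrite lead_coef_eq0.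
rewrite /lead_coef => h; by rewrite -/(lead_coef _) lead_coef_eq0.
Qed.

Lemma nz_pc q i j : pc q i j != 0 -> q != 0.
Proof. by apply: contraNneq => ->; rewrite /pc !coef0. Qed.

Definition trs d (a b : nat) := d b a.
Definition ptr q := mk2 (fun i j => pc q j i) (size q) (Nq q).

Lemma pc_ptr q a b : pc (ptr q) a b = pc q b a.
Proof.
rewrite pc_mk2; case: ifP => // /negbT; rewrite negb_and -!leqNgt => h.
by rewrite pc_out // orbC.
Qed.

Lemma pmul_ptr q d x y : pmul (ptr q) (trs d) x y = pmul q d y x.
Proof.
rewrite /pmul exchange_big; apply: eq_bigr => i _; apply: eq_bigr => j _.
by rewrite pc_ptr.
Qed.

Lemma prat_tr d : prat d -> prat (trs d).
Proof.
move=> [q [p [nq H]]]; exists (ptr q), (ptr p); split.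
  have [i [j h]] := pc_nz _ nq; apply: (@nz_pc _ j i); by rewrite pc_ptr.
by move=> x y; rewrite pmul_ptr H pc_ptr.
Qed.

Definition rowV (h : nat -> C) (a b : nat) := if a == 0%N then h b else 0.
Definition colp q i := mk2 (fun a b => pc q i b) 1 (size q).

Lemma pc_colp q i a b : pc (colp q i) a b = if a == 0%N then pc q i b else 0.
Proof.
rewrite pc_mk2 ltnS leqn0; case: (a == 0%N) => //=.
by case: ltnP => // h; rewrite pc_out // h.
Qed.

Lemma pmul_col q i g a b : pmul (colp q i) (rowV g) a b =
  if a == 0%N then \sum_(j < b.+1) pc q i j * g (b - j)%N else 0.
Proof.
rewrite /pmul; case: a => [|a] /=.
  by apply: eq_bigr => j _; rewrite big_ord1 pc_colp /rowV.
apply: big1 => j _; apply: big1 => [[[|i'] hi]] _ /=.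
  by rewrite /rowV /= mulr0.
by rewrite pc_colp /= mul0r.
Qed.

Lemma prat_row d k : prat d -> prat (rowV (d k)).
Proof.
move=> [q [p [nq H]]].
have ex : exists i, colp q i != 0.
  have [i0 [j0 h]] := pc_nz _ nq; exists i0; apply: (@nz_pc _ 0%N j0).
  by rewrite pc_colp.
case: (ex_minnP ex) => s Hs Hmin.
have Z : forall i j, (i < s)%N -> pc q i j = 0.
  move=> i j hi; apply/eqP; apply: contraTT hi => h; rewrite -leqNgt; apply: Hmin.
  apply: (@nz_pc _ 0%N j); by rewrite pc_colp.
elim/ltn_ind: k => k IH.
apply: (prat_div (colp q s)) => //.
have key : forall a b, rowV (fun y => pc p (s + k)%N y) a b
   - \sum_(t < k) pmul (colp q (s + k - t)%N) (rowV (d t)) a b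
   = pmul (colp q s) (rowV (d k)) a b.
  move=> a b; rewrite pmul_col; under eq_bigr do rewrite pmul_col.
  rewrite /rowV; case: (a == 0%N); last by rewrite big1 // subr0.
  have := H (s + k)%N b; rewrite /pmul exchange_big /= => <-.
  rewrite -addnS big_split_ord /= big1 ?add0r; last first.
    by move=> i _; apply: big1 => j _; rewrite Z ?mul0r.
  rewrite big_ord_recl /= [X in _ + X - _](reindex_inj rev_ord_inj) /=.
  rewrite [X in _ + X - _](_ : _ = \sum_(t < k) \sum_(j < b.+1)
       pc q (s + k - t)%N j * d t (b - j)%N); last first.
    apply: eq_bigr => t _; apply: eq_bigr => j _; have ht := ltn_ord t.
    congr (pc q _ j * d _ _); rewrite /bump /= add1n; lia.
  by rewrite addrK; apply: eq_bigr => j _; rewrite addn0 addKn.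
apply: (prat_ext _ key).
apply: prat_add.
  apply: (prat_ext (prat_pc (colp p (s + k)%N))) => a b; by rewrite pc_colp /rowV.
have hs : prat (fun a b => \sum_(t < k) pmul (colp q (s + k - t)%N) (rowV (d t)) a b).
  apply: (@prat_sum k (fun t => pmul (colp q (s + k - t)%N) (rowV (d t)))).
  by move=> t ht; apply: prat_mulp; apply: IH.
apply: (prat_ext (@prat_scale (-1) _ hs)).
by move=> a b; rewrite mulN1r.
Qed.


Arguments prat_tr {d}.
Arguments prat_row {d} k.
Definition rowU (h : nat -> C) (a b : nat) := if b == 0%N then h a else 0.

Lemma prat_colU d : prat d -> prat (rowU (fun x => d x 0%N)).
Proof.
move=> H; apply: (prat_ext (prat_tr (prat_row 0 (prat_tr H)))) => a b.
by rewrite /trs /rowV /rowU.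
Qed.

Lemma sum_if_eq n (F : nat -> C) (a : nat) :
  \sum_(k < n) (if a == k :> nat then F k else 0) = if (a < n)%N then F a else 0.
Proof.
rewrite (eq_bigr (fun k : 'I_n => if (k == a :> nat) then F k else 0)).
  by rewrite -big_mkcond big_ord1_eq.
by move=> k _; rewrite eq_sym; case: eqP => [->|].
Qed.

Lemma prat_rowK (g : nat -> C) k : prat (rowV g) -> prat (fun a b => if a == k then g b else 0).
Proof.
move=> H; apply: (prat_ext (prat_mulp (('X^k)%:P) _ H)) => a b.
rewrite /pmul big_ord_recl [X in _ + X]big1 ?addr0; last first.
  by move=> j _; apply: big1 => i _; rewrite /pc coefC /= coef0 mul0r.
rewrite (eq_bigr (fun i : 'I_a.+1 => if (i == k :> nat) then rowV g (a - i)%N (b - 0)%N else 0)); last first.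
  by move=> i _; rewrite /pc coefC /= coefXn; case: eqP => _; rewrite ?mul1r ?mul0r.
rewrite (eq_bigr (fun i : 'I_a.+1 => if k == i :> nat then rowV g (a - i)%N (b - 0)%N else 0)); last by move=> i _; rewrite eq_sym.
rewrite (sum_if_eq _ (fun i => rowV g (a - i)%N (b - 0)%N)) /rowV subn0.
case: (ltngtP a k) => [h1|h1|->]; last by rewrite ltnSn subnn.
  by rewrite ltnS leqNgt h1.
by rewrite ltnS (ltnW h1) subn_eq0 leqNgt h1.
Qed.

Definition rX (m : nat) d (a b : nat) := if inX m a b then d a b else 0.

Lemma prat_rX m d : prat d -> prat (rX m d).
Proof.
move=> H.
have H1 : prat (fun a b => \sum_(k < m) (if a == k then d k b else 0)).
  by apply: (@prat_sum m (fun k a b => if a == k then d k b else 0)) => k _;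
     apply: prat_rowK; apply: prat_row.
have H2 := prat_add (prat_colU _ H) (@prat_scale (-1) _ (prat_pc (mk2 (fun i j => d i 0%N) m 1))).
apply: (prat_ext (prat_add H1 H2)) => a b.
rewrite (sum_if_eq _ (fun k => d k b)) pc_mk2 /rX /inX /rowU mulN1r.
case: (ltnP a m) => ha /=; case: (b =P 0%N) => hb /=.
- by rewrite hb /= subrr addr0.
- by rewrite ltnS leqn0 (introF eqP hb) subrr addr0.
- by rewrite hb /= add0r subr0.
- by rewrite subrr addr0.
Qed.

End PS.
Arguments prat {C}.
Arguments pc {C}.
Arguments pmul {C}.
Arguments rX {C}.
Arguments prat_ext {C d d'}.
Arguments prat_rX {C m d}.
Arguments prat_mulp {C} h {d}.
Arguments prat_div {C} h {d}.
Arguments Nq {C}.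
Arguments mk2 {C}.
Arguments pc_nz {C q}.

Lemma sum_rev_poly (C : fieldType) m a (c : nat -> C) (G : nat -> C) :
  (m <= a)%N ->
  \sum_(i < a.+1) (\poly_(i < m.+1) c (m - i)%N)`_i * G (a - i)%N =
  \sum_(al < m.+1) c al * G (a - m + al)%N.
Proof.
move=> hma.
rewrite (eq_bigr (fun i : 'I_a.+1 => if (i < m.+1)%N then c (m - i)%N * G (a - i)%N else 0)); last first.
  by move=> i _; rewrite coef_poly; case: ifP => _; rewrite ?mul0r.
rewrite -big_mkcond -(@big_ord_widen _ 0 +%R m.+1 a.+1 (fun i => c (m - i)%N * G (a - i)%N)) ?ltnS //.
rewrite (reindex_inj rev_ord_inj) /=; apply: eq_bigr => al _.
have h := ltn_ord al.
have -> : (m - (m - al))%N = al by lia.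
by congr (_ * G _); lia.
Qed.

Theorem main_ps (C : fieldType) (m : nat) (P Q : {poly C})
  (phi r : nat -> nat -> C) :
  size P = m.+1 ->
  (forall x y : nat,
     \sum_(alpha < m.+1) P`_alpha * r (x + alpha)%N y.+1
     - \sum_(alpha < m.+1) Q`_alpha * r (x + alpha)%N y = 0) ->
  (forall x y : nat, inX m x y -> r x y = phi x y) ->
  (prat r <-> prat (init_coef m phi)).
Proof.
move=> hP rec hX.
have Phi : forall a b, rX m r a b = init_coef m phi a b.
  by move=> a b; rewrite /rX /init_coef; case: ifP => // h; rewrite hX.
split.
  by move=> H; apply: (prat_ext (prat_rX H)).
move=> H.
have HPhi : prat (rX m r) by apply: (prat_ext H) => a b; rewrite Phi.
set Pt := \poly_(i < m.+1) P`_(m - i)%N.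
set Qt := \poly_(i < m.+1) Q`_(m - i)%N.
set L : {poly {poly C}} := Pt%:P - 'X * Qt%:P.
have pcL : forall i j, pc L i j = (if j == 0%N then Pt`_i else 0) - (if j == 1%N then Qt`_i else 0).
  move=> i j; rewrite /pc /L coefB coefXM !coefC; case: j => [|[|j]] //=;
  by rewrite ?coefB ?coef0 ?subr0 ?sub0r.
have nL : L != 0.
  apply: (@nz_pc _ _ 0%N 0%N); rewrite pcL /= subr0 /Pt coef_poly /= subn0.
  have : P != 0 by rewrite -size_poly_eq0 hP.
  by rewrite -lead_coef_eq0 /lead_coef hP.
apply: (prat_div L) => //.
apply: (prat_ext (@prat_rX _ m _ (prat_mulp L HPhi))) => a b.
rewrite {1}/rX; case hin: (inX m a b).
  apply: pmul_local => a' b' ha hb; rewrite /rX.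
  have hin' : inX m a' b'.
    move: hin; rewrite /inX => /orP [h|/eqP h]; apply/orP.
      by left; apply: leq_ltn_trans h.
    by right; move: hb; rewrite h leqn0.
  by rewrite hin'.
move/negbT: hin; rewrite /inX negb_or -leqNgt => /andP [ha hb].
case: b hb => [//|b] _.
rewrite /pmul big_ord_recl big_ord_recl [X in _ + (_ + X)]big1 ?addr0; last first.
  by move=> j _; apply: big1 => i _; rewrite pcL /= subrr mul0r.
rewrite (eq_bigr (fun i : 'I_a.+1 => Pt`_i * r (a - i)%N b.+1)); last first.
  by move=> i _; rewrite pcL /= subr0 subn0.
rewrite [X in _ + X](eq_bigr (fun i : 'I_a.+1 => - (Qt`_i * r (a - i)%N b))); last first.
  by move=> i _; rewrite pcL /= sub0r mulNr /bump /= subSS subn0.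
rewrite sumrN /Pt /Qt (@sum_rev_poly _ _ _ (fun k => P`_k) (fun x => r x b.+1)) //.
rewrite (@sum_rev_poly _ _ _ (fun k => Q`_k) (fun x => r x b)) //.

Qed.

Section Trans.
Variable C : fieldType.
Implicit Types (q p : {poly {poly C}}) (d : nat -> nat -> C).

Lemma sum_ext_ord n1 n2 (F : nat -> C) : (n1 <= n2)%N ->
  (forall i, (n1 <= i)%N -> (i < n2)%N -> F i = 0) ->
  \sum_(i < n1) F i = \sum_(i < n2) F i.
Proof.
move=> h H; rewrite (big_ord_widen _ F h) big_mkcond; apply: eq_bigr => i _.
by case: ltnP => // hi; rewrite H.
Qed.

Lemma dsum_ext A B K (G : nat -> nat -> C) : (A <= K)%N -> (B <= K)%N ->
  (forall i j, (i < K)%N -> (j < K)%N -> (A <= j)%N || (B <= i)%N -> G i j = 0) ->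
  \sum_(j < A) \sum_(i < B) G i j = \sum_(j < K) \sum_(i < K) G i j.
Proof.
move=> hA hB H.
transitivity (\sum_(j < A) \sum_(i < K) G i j).
  apply: eq_bigr => j _; apply: (@sum_ext_ord B K (fun i => G i j)) => // i h1 h2.
  by apply: H => //; [apply: leq_trans (ltn_ord j) hA | rewrite h1 orbT].
apply: (@sum_ext_ord A K (fun j => \sum_(i < K) G i j)) => //.
by move=> j h1 h2; apply: big1 => i _; apply: H => //; rewrite h1.
Qed.

Lemma serZ_negl d s t : (s < 0)%R -> ser_coefZ d s t = 0.
Proof. by case: s => [n|n] //= h; exfalso; lia. Qed.

Lemma serZ_negr d s t : (t < 0)%R -> ser_coefZ d s t = 0.
Proof. by case: s => [n|n] //; case: t => [k|k] //= h; exfalso; lia. Qed.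

Lemma pmul_eq q d x y K :
  (forall i j, (K <= i)%N || (K <= j)%N -> pc q i j = 0) ->
  pmul q d x y = \sum_(j < K) \sum_(i < K)
     pc q i j * ser_coefZ d (x%:Z - i%:Z) (y%:Z - j%:Z).
Proof.
move=> HK; set K' := (K + x + y).+1.
transitivity (\sum_(j < K') \sum_(i < K')
     pc q i j * ser_coefZ d (x%:Z - i%:Z) (y%:Z - j%:Z)).
  rewrite /pmul -(@dsum_ext y.+1 x.+1 K' (fun i j => pc q i j * ser_coefZ d (x%:Z - i%:Z) (y%:Z - j%:Z))); first last.
  - move=> i j _ _ /orP [h|h]; [rewrite serZ_negr ?mulr0 // | rewrite serZ_negl ?mulr0 //]; lia.
  - rewrite /K'; lia.
  - rewrite /K'; lia.
  apply: eq_bigr => j _; apply: eq_bigr => i _.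
  have hi := ltn_ord i; have hj := ltn_ord j.
  by rewrite !subzn // -ltnS.
symmetry; apply: (@dsum_ext K K K' (fun i j => pc q i j * ser_coefZ d (x%:Z - i%:Z) (y%:Z - j%:Z))); try (rewrite /K'; lia).
by move=> i j _ _ /orP [h|h]; rewrite HK ?mul0r // h ?orbT.
Qed.

Lemma psm_eq q d a b K : (size q <= K)%N -> (Nq q <= K)%N ->
  polyser_mul_coef q d a b = \sum_(j < K) \sum_(i < K)
     pc q i j * ser_coefZ d (i%:Z - a - 1) (j%:Z - b - 1).
Proof.
move=> hS hN; rewrite /polyser_mul_coef.
transitivity (\sum_(j < size q) \sum_(i < K) pc q i j * ser_coefZ d (i%:Z - a - 1) (j%:Z - b - 1)).
  apply: eq_bigr => j _.
  apply: (@sum_ext_ord _ K (fun i => pc q i j * ser_coefZ d (i%:Z - a - 1) (j%:Z - b - 1))).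
    apply: leq_trans hN.
    exact: (@leq_bigmax _ (fun j : 'I_(size q) => size (q`_j)%R) j).
  by move=> i h1 h2; rewrite /pc nth_default ?mul0r.
apply: (@sum_ext_ord (size q) K (fun j => \sum_(i < K) pc q i j * ser_coefZ d (i%:Z - a - 1) (j%:Z - b - 1))) => //.
move=> j h1 h2; apply: big1 => i _.
by rewrite pc_out ?mul0r // h1.
Qed.

Lemma dsum_rev K (G : nat -> nat -> C) :
  \sum_(j < K) \sum_(i < K) G i j =
  \sum_(j < K) \sum_(i < K) G (K - i.+1)%N (K - j.+1)%N.
Proof.
rewrite (reindex_inj rev_ord_inj); apply: eq_bigr => j _.
by rewrite (reindex_inj rev_ord_inj).
Qed.

Lemma size_mk2 (f : nat -> nat -> C) N M : (size (mk2 f N M) <= M)%N.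
Proof. exact: size_poly. Qed.

Lemma Nq_mk2 (f : nat -> nat -> C) N M : (Nq (mk2 f N M) <= N)%N.
Proof.
apply/bigmax_leqP => j _; rewrite /mk2 coef_poly; case: ifP => _.
  exact: size_poly.
by rewrite size_poly0.
Qed.

Lemma pc_bound q i j : pc q i j != 0 -> (i < Nq q)%N && (j < size q)%N.
Proof.
move=> h; apply/andP; split; rewrite ltnNge; apply/negP => h'; move: h;
  by rewrite pc_out ?eqxx // h' ?orbT.
Qed.

Lemma poly2_neg p a b : ((a < 0) || (b < 0))%R -> poly2_coefZ p a b = 0.
Proof. by rewrite /poly2_coefZ; case: ifP => // /andP [h1 h2] h; exfalso; lia. Qed.

Lemma rat_to_prat d : rational_series d -> prat d.
Proof.
move=> [p [q [nq H]]].
set K := (Nq q + size q)%N.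
set qt := mk2 (fun i j => pc q (K - i.+1) (K - j.+1)) K K.
set pt := mk2 (fun x y => poly2_coefZ p (K%:Z - 2 - x%:Z) (K%:Z - 2 - y%:Z)) K K.
exists qt, pt; split.
  have [i [j h]] := pc_nz nq; have /andP [hi hj] := pc_bound _ _ _ h.
  apply: (@nz_pc _ _ (K - i.+1)%N (K - j.+1)%N); rewrite pc_mk2.
  have E : forall K j, (j < K)%N -> (K - (K - j.+1).+1 = j)%N by move=> ? ? ?; lia.
  have hiK : (i < K)%N by apply: leq_trans hi (leq_addr _ _).
  have hjK : (j < K)%N by apply: leq_trans hj (leq_addl _ _).
  rewrite !E //.
  by rewrite ifT //; apply/andP; split; rewrite subnSK // leq_subr.
move=> x y.
rewrite (@pmul_eq _ _ _ _ K); last first.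
  by move=> i j h; rewrite pc_mk2; case: ifP => // /andP [h1 h2]; exfalso; lia.
have -> : pc pt x y = poly2_coefZ p (K%:Z - 2 - x%:Z) (K%:Z - 2 - y%:Z).
  rewrite pc_mk2; case: ifP => // /negbT; rewrite negb_and -!leqNgt => h.
  by rewrite poly2_neg //; apply/orP; case/orP: h => h; [left|right]; lia.
rewrite -H (@psm_eq _ _ _ _ K (leq_addl _ _) (leq_addr _ _)).
rewrite (@dsum_rev K (fun i j => pc q i j * ser_coefZ d (i%:Z - (K%:Z - 2 - x%:Z) - 1) (j%:Z - (K%:Z - 2 - y%:Z) - 1))).
apply: eq_bigr => j _; apply: eq_bigr => i _.
have hi := ltn_ord i; have hj := ltn_ord j.
rewrite pc_mk2 hi hj /=; congr (_ * ser_coefZ d _ _); lia.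
Qed.

Lemma prat_to_rat d : prat d -> rational_series d.
Proof.
move=> [qt [pt [nq H]]].
set K := (Nq qt + size qt + Nq pt + size pt).+2.
have hNq : (Nq qt <= K.-2)%N by rewrite /K /= -!addnA leq_addr.
have hSq : (size qt <= K.-2)%N by rewrite /K /= -!addnA (addnC (Nq qt)) -!addnA leq_addr.
have hNp : (Nq pt <= K.-2)%N by rewrite /K /= addnC addnA leq_addl.
have hSp : (size pt <= K.-2)%N by rewrite /K /= leq_addl.
have hK : (1 < K)%N by [].
have E : forall j, (j < K)%N -> (K - (K - j.+1).+1 = j)%N by move=> ? ?; lia.
set q := mk2 (fun i j => pc qt (K - i.+1) (K - j.+1)) K K.
set p := mk2 (fun i j => pc pt (K - i.+2) (K - j.+2)) K.-1 K.-1.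
exists p, q; split.
  have [i [j h]] := pc_nz nq; have /andP [hi hj] := pc_bound _ _ _ h.
  apply: (@nz_pc _ _ (K - i.+1)%N (K - j.+1)%N); rewrite pc_mk2.
  have hiK : (i < K)%N by apply: (leq_trans hi); apply: (leq_trans hNq); rewrite /K /=; lia.
  have hjK : (j < K)%N by apply: (leq_trans hj); apply: (leq_trans hSq); rewrite /K /=; lia.
  rewrite !E //.
  by rewrite ifT //; apply/andP; split; rewrite subnSK // leq_subr.
move=> a b.
rewrite (@psm_eq _ _ _ _ K (size_mk2 _ _ _) (Nq_mk2 _ _ _)).
rewrite (@dsum_rev K (fun i j => pc q i j * ser_coefZ d (i%:Z - a - 1) (j%:Z - b - 1))).
transitivity (\sum_(j < K) \sum_(i < K) pc qt i j *
   ser_coefZ d ((K%:Z - 2 - a) - i%:Z) ((K%:Z - 2 - b) - j%:Z)).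
  apply: eq_bigr => j _; apply: eq_bigr => i _.
  have hi := ltn_ord i; have hj := ltn_ord j.
  rewrite pc_mk2 ifT; last by apply/andP; split; rewrite subnSK // leq_subr.
  rewrite !E //; congr (_ * ser_coefZ d _ _); lia.
have bq : forall i j, (K <= i)%N || (K <= j)%N -> pc qt i j = 0.
  move=> i j /orP [h|h]; apply: pc_out; apply/orP; [right|left]; lia.
case: (boolP ((0 <= K%:Z - 2 - a) && (0 <= K%:Z - 2 - b))%R) => [/andP [hX hY] | hXY].
  have [x ex] : exists x : nat, K%:Z - 2 - a = x%:Z by exists (absz (K%:Z - 2 - a)%R); lia.
  have [y ey] : exists y : nat, K%:Z - 2 - b = y%:Z by exists (absz (K%:Z - 2 - b)%R); lia.
  rewrite ex ey -(@pmul_eq _ _ x y K bq) H.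
  rewrite /poly2_coefZ; case: ifP => [/andP [ha hb] | hab].
    change ((p`_(absz b))`_(absz a)) with (pc p (absz a) (absz b)).
    rewrite pc_mk2 ifT; last by apply/andP; split; lia.
    congr (pc pt _ _); lia.
  apply: pc_out; move/negbT: hab; rewrite negb_and -!ltNge => /orP [h|h];
    apply/orP; [right|left]; lia.
rewrite big1; last first.
  move=> j _; apply: big1 => i _; move: hXY; rewrite negb_and -!ltNge => /orP [h|h].
    by rewrite serZ_negl ?mulr0 //; lia.
  by rewrite serZ_negr ?mulr0 //; lia.
rewrite /poly2_coefZ; case: ifP => // /andP [ha hb].
change ((p`_(absz b))`_(absz a)) with (pc p (absz a) (absz b)).
rewrite pc_mk2 ifF //; apply/negbTE; rewrite negb_and -!leqNgt.
move: hXY; rewrite negb_and -!ltNge => /orP [h|h]; apply/orP; [left|right]; lia.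
Qed.

Lemma rat_iff d : rational_series d <-> prat d.
Proof. split; [exact: rat_to_prat | exact: prat_to_rat]. Qed.

End Trans.

Theorem mainTheorem3 (C : numClosedFieldType) (m : nat) (P Q : {poly C})
  (phi r : nat -> nat -> C) :
  (1 <= m)%N ->
  size P = m.+1 ->
  (size Q <= m)%N ->
  (forall x y : nat,
     \sum_(alpha < m.+1) P`_alpha * r (x + alpha)%N y.+1
     - \sum_(alpha < m.+1) Q`_alpha * r (x + alpha)%N y = 0) ->
  (forall x y : nat, inX m x y -> r x y = phi x y) ->
  (rational_series r <-> rational_series (init_coef m phi)).
Proof.
move=> _ hP _ rec hX.
rewrite !rat_iff.
exact: (@main_ps C m P Q phi r hP rec hX).
Qed.
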